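(* Let $k,a,b$ be positive real numbers and $\{S^{(a,b)}_{k,n}\}_{n\ge0}$ the $k$-FL sequence. For any integers $n\ge r\ge0$, $S^{(a,b)}_{k,n-r}S^{(a,b)}_{k,n+r}-(S^{(a,b)}_{k,n})^2=(-1)^{n-r+1}\{a^2-(k^2+4)b^2\}F_{k,r}^2$.
   Context: The $k$-FL sequence (for positive reals $k,a,b$) is $S^{(a,b)}_{k,0}=2b$, $S^{(a,b)}_{k,1}=bk+a$, $S^{(a,b)}_{k,n}=kS^{(a,b)}_{k,n-1}+S^{(a,b)}_{k,n-2}$. $F_{k,n}$ is the $k$-Fibonacci sequence: $F_{k,0}=0$, $F_{k,1}=1$, $F_{k,n}=kF_{k,n-1}+F_{k,n-2}$. *)

(* Defs.v *)
From Stdlib Require Import Reals.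
Open Scope R_scope.

Fixpoint kfib (k : R) (n : nat) : R :=
  match n with
  | O => 0
  | S m => match m with
           | O => 1
           | S p => k * kfib k m + kfib k p
           end
  end.

Fixpoint kFL (k a b : R) (n : nat) : R :=
  match n with
  | O => 2 * b
  | S m => match m with
           | O => b * k + a
           | S p => k * kFL k a b m + kFL k a b p
           end
  end.

(* Main.v *)
Require Import Defs.
From Stdlib Require Import Reals Lra Lia.
Open Scope R_scope.

Lemma kFL_SS k a b n : kFL k a b (S (S n)) = k * kFL k a b (S n) + kFL k a b n.
Proof. reflexivity. Qed.
Lemma kfib_SS k n : kfib k (S (S n)) = k * kfib k (S n) + kfib k n.
Proof. reflexivity. Qed.

Lemma kFL_add k a b m j : kFL k a b (m + j) =
  kfib k j * kFL k a b (S m) + (kfib k (S j) - k * kfib k j) * kFL k a b m.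
Proof.
  assert (H : forall j0, kFL k a b (m + j0) =
  kfib k j0 * kFL k a b (S m) + (kfib k (S j0) - k * kfib k j0) * kFL k a b m /\
  kFL k a b (m + S j0) =
  kfib k (S j0) * kFL k a b (S m) + (kfib k (S (S j0)) - k * kfib k (S j0)) * kFL k a b m).
  { clear j. induction j0 as [|j IH].
    - rewrite Nat.add_0_r, Nat.add_1_r. simpl. split; ring.
    - destruct IH as [H1 H2]. split; [exact H2|].
      replace (m + S (S j))%nat with (S (S (m + j))) by lia.
      rewrite kFL_SS. replace (S (m + j)) with (m + S j)%nat by lia.
      rewrite H2, H1, !kfib_SS. ring. }
  apply H.
Qed.

Lemma kfib_add k m j : kfib k (m + j) =
  kfib k j * kfib k (S m) + (kfib k (S j) - k * kfib k j) * kfib k m.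
Proof.
  assert (H : forall j0, kfib k (m + j0) =
  kfib k j0 * kfib k (S m) + (kfib k (S j0) - k * kfib k j0) * kfib k m /\
  kfib k (m + S j0) =
  kfib k (S j0) * kfib k (S m) + (kfib k (S (S j0)) - k * kfib k (S j0)) * kfib k m).
  { clear j. induction j0 as [|j IH].
    - rewrite Nat.add_0_r, Nat.add_1_r. simpl. split; ring.
    - destruct IH as [H1 H2]. split; [exact H2|].
      replace (m + S (S j))%nat with (S (S (m + j))) by lia.
      rewrite kfib_SS. replace (S (m + j)) with (m + S j)%nat by lia.
      rewrite H2, H1, !kfib_SS. ring. }
  apply H.
Qed.

Lemma kFL_Q k a b m : kFL k a b (S m) ^ 2 - k * kFL k a b m * kFL k a b (S m)
  - kFL k a b m ^ 2 = (-1) ^ m * (a ^ 2 - (k ^ 2 + 4) * b ^ 2).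
Proof.
  induction m as [|m IH].
  - simpl. ring.
  - rewrite kFL_SS. change ((-1) ^ S m) with ((-1) * (-1) ^ m).
    replace ((-1) * (-1) ^ m * (a ^ 2 - (k ^ 2 + 4) * b ^ 2))
      with (- ((-1) ^ m * (a ^ 2 - (k ^ 2 + 4) * b ^ 2))) by ring.
    rewrite <- IH. ring.
Qed.

Theorem theorem4p18 (k a b : R) (hk : 0 < k) (ha : 0 < a) (hb : 0 < b)
  (n r : nat) (hrn : (r <= n)%nat) :
  kFL k a b (n - r) * kFL k a b (n + r) - (kFL k a b n) ^ 2
  = (-1) ^ (n - r + 1) * (a ^ 2 - (k ^ 2 + 4) * b ^ 2) * (kfib k r) ^ 2.
Proof.
  destruct (Nat.le_exists_sub r n hrn) as [m [Hm _]]. subst n.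
  replace (m + r - r)%nat with m by lia.
  replace (m + r + r)%nat with (m + (r + r))%nat by lia.
  rewrite (kFL_add k a b m (r + r)), (kFL_add k a b m r).
  rewrite (kfib_add k r r).
  replace (S (r + r)) with (r + S r)%nat by lia.
  rewrite (kfib_add k r (S r)), kfib_SS.
  rewrite pow_add.
  replace ((-1) ^ m * (-1) ^ 1 * (a ^ 2 - (k ^ 2 + 4) * b ^ 2))
    with (- ((-1) ^ m * (a ^ 2 - (k ^ 2 + 4) * b ^ 2))) by ring.
  rewrite <- kFL_Q. ring.
Qed.
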